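(* Let $\phi:\langle S\mid R\rangle\to\mathbb{Z}^n$ be an isomorphism where $\langle S\mid R\rangle$ is a 3-presentation, let $S'\subseteq S$, and let $d=\dim S'$. Then there exist words $w_1,\dots,w_d$ in the free group on $S$ such that, letting $R''$ consist of the words obtained from each element of $R\cup\{w_1,\dots,w_d\}$ by deleting every occurrence of every generator in $S'$, we have $\langle S\setminus S'\mid R''\rangle\cong\mathbb{Z}^{n-d}$ (and $|R''|=|R|+d$).
   Context: A 3-presentation of a group $G$ is a group presentation $\langle S\mid R\rangle\cong G$ (with $S,R$ finite) in which each relation is the empty word, $g^a$, $g^ah^b$, or $g^ah^bi^c$ with $g,h,i\in S$ and $a,b,c\in\mathbb{Z}$. For $S'\subseteq S$, $\dim S'=\dim\operatorname{span}_{\mathbb{R}}\{\phi(g):g\in S'\}$, viewing $\phi(g)\in\mathbb{Z}^n\subseteq\mathbb{R}^n$. *)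

(* Defs.v *)
From HB Require Import structures.
From mathcomp Require Import all_boot all_order all_algebra.
From mathcomp Require Import Rstruct.
From Stdlib Require Import Relations.
From Stdlib Require Reals.
Set Implicit Arguments. Unset Strict Implicit. Unset Printing Implicit Defensive.
Import Order.TTheory GRing.Theory Num.Theory.
Local Open Scope ring_scope.

(* A word in the free group on generators of type T, written as a list of
   syllables (g, a) standing for g^a (not necessarily freely reduced). *)
Definition word (T : Type) := seq (T * int).

Definition word_over (T : finType) (S : {set T}) (w : word T) : bool :=
  all (fun p => p.1 \in S) w.

(* One elementary move in the presented group <S | R>: deleting (or, via the
   symmetric closure, inserting) a relator anywhere, merging adjacent powers
   of the same generator, and deleting a zero power.  Free reduction
   x^a x^-a -> x^0 -> empty is a special case. *)
Inductive pstep (T : Type) (R : seq (word T)) : word T -> word T -> Prop :=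
| pstep_rel u v r : List.In r R -> pstep R (u ++ r ++ v) (u ++ v)
| pstep_merge u v x (a b : int) :
    pstep R (u ++ (x, a) :: (x, b) :: v) (u ++ (x, a + b) :: v)
| pstep_zero u v x : pstep R (u ++ (x, 0) :: v) (u ++ v).

Definition pequiv (T : Type) (R : seq (word T)) : relation (word T) :=
  clos_refl_sym_trans _ (pstep R).

Definition evalw (T : Type) (n : nat) (phi : T -> 'rV[int]_n) (w : word T)
  : 'rV[int]_n := \sum_(p <- w) (phi p.1 *~ p.2).

(* The map g |-> phi g on generators induces an isomorphism <S | R> -> Z^n:
   its kernel is exactly the trivial element and it is surjective.  (That the
   map is well-defined, i.e. kills R, follows from the kernel condition.) *)
Definition pres_iso (T : finType) (S : {set T}) (R : seq (word T)) (n : nat)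
  (phi : T -> 'rV[int]_n) : Prop :=
  (forall w, word_over S w -> (evalw phi w = 0 <-> pequiv R w [::])) /\
  (forall v : 'rV[int]_n, exists2 w, word_over S w & evalw phi w = v).

Definition pres_isoZn (T : finType) (S : {set T}) (R : seq (word T)) (n : nat)
  : Prop := exists phi : T -> 'rV[int]_n, pres_iso S R phi.

Definition three_pres (T : finType) (S : {set T}) (R : seq (word T)) : bool :=
  all (fun r => (size r <= 3)%N && word_over S r) R.

Definition dimgen (T : finType) (n : nat) (phi : T -> 'rV[int]_n)
  (S' : {set T}) : nat :=
  \dim <<[seq map_mx (fun z : int => z%:~R : Reals.Rdefinitions.R) (phi g)
          | g <- enum S']>>%VS.

Definition delete_gens (T : finType) (S' : {set T}) (w : word T) : word T :=
  [seq p <- w | p.1 \notin S'].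

(* Main.v *)
Require Import Defs.
From HB Require Import structures.
From mathcomp Require Import all_boot all_order all_algebra.
From Stdlib Require Import Relations.
Set Implicit Arguments. Unset Strict Implicit. Unset Printing Implicit Defensive.
Import Order.TTheory GRing.Theory Num.Theory.
Local Open Scope ring_scope.
From mathcomp Require Import Rstruct zify.
Import VectorInternalTheory.

Lemma dim_span_rank (F : fieldType) n (X : seq 'rV[F]_n) :
  \dim <<X>>%VS = \rank (\matrix_(i < size X) X`_i).
Proof.
rewrite [@span _ _]unlock /dimv genmxE.
set G := lin1_mx (v2r : 'rV[F]_n -> _).
have -> : b2mx (in_tuple X) = (\matrix_(i < size X) X`_i) *m G.
  apply/row_matrixP => i; rewrite row_mul !rowK mul_rV_lin1 (tnth_nth 0) //.
rewrite mxrankMfree //.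
rewrite /row_free eqn_leq rank_leq_row /=.
have H : G *m lin1_mx (r2v : _ -> 'rV[F]_n) = 1%:M.
  apply/row_matrixP => i; rewrite !rowE mulmxA mul_rV_lin1 mul_rV_lin1 /= v2rK.
  by rewrite mulmx1.
by rewrite -{1}(mxrank1 F n) -H mxrankM_maxl.
Qed.

Lemma snf_rank (F : numFieldType) k n (M : 'M[int]_(k,n)) : exists r (B : 'M[int]_n),
  [/\ B \in unitmx, (r <= n)%N,
      \rank (map_mx (fun z : int => z%:~R : F) M) = r &
      forall (i : 'I_k) (j : 'I_n), (r <= j)%N -> (M *m invmx B) i j = 0].
Proof.
have [L uL [B uB [dd sdd defM]]] := int_Smith_normal_form M.
set D := \matrix_(i, j) _ in defM.
pose r := find (fun x => x == 0) (take (minn k n) dd).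
have rle : (r <= minn k n)%N.
  by apply: leq_trans (find_size _ _) _; rewrite size_take_min geq_minl.
have nz i : (i < r)%N -> dd`_i != 0.
  move=> ir; have := before_find 0 ir; rewrite nth_take ?(leq_trans ir) //.
  by move/negbT.
have z i : (r <= i)%N -> (i < minn k n)%N -> dd`_i = 0.
  move=> ri ik; case: (ltnP i (size dd)) => [isz|]; last by move=> h; rewrite nth_default.
  have hs : has (fun x => x == 0) (take (minn k n) dd).
    rewrite has_find; apply: leq_ltn_trans ri _; by rewrite size_take_min leq_min ik.
  have := nth_find 0 hs; rewrite nth_take; last first.
    exact: leq_ltn_trans ri ik.
  move/eqP=> dr0.
  have rsz : (r < size dd)%N by apply: leq_ltn_trans ri isz.
  have := @sorted_leq_nth _ _ (@dvdz_trans) (@dvdzz) 0 dd sdd r i rsz isz ri.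
  by rewrite dr0 dvd0z => /eqP.
have Dz (l : 'I_k) (j : 'I_n) : (r <= j)%N -> D l j = 0.
  move=> rj; rewrite mxE; case: eqP => [lj|]; last by rewrite mulr0n.
  rewrite z ?mul0rn //; first by rewrite lj.
  by rewrite leq_min lj !ltn_ord andbT -lj ltn_ord.
exists r, B; split => //.
- by apply: leq_trans rle (geq_minr _ _).
- pose f := (fun z : int => z%:~R : F).
  have unit_map m (A : 'M[int]_m) : A \in unitmx -> map_mx f A \in unitmx.
    move=> uA; have := mulmxV uA; move/(congr1 (map_mx f)).
    by rewrite /f map_mxM map_mx1 => /mulmx1_unit [].
  rewrite defM !map_mxM.
  rewrite mxrankMfree ?row_free_unit ?unit_map //.
  have fL : row_full (map_mx f L) by rewrite row_full_unit unit_map.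
  rewrite (eqmxMfull _ fL).
  pose e := \row_(j < n) (if (j < r)%N then f dd`_j else 1).
  have -> : map_mx f D = pid_mx r *m diag_mx e.
    apply/matrixP => i j; rewrite mul_mx_diag !mxE.
    case: (eqVneq (i : nat) j) => [ij|nij]; last first.
      by rewrite mul0r /f mulr0n.
    rewrite /= -ij; case: ltnP => jr.
      by rewrite mul1r /f mulr1n.
    by rewrite mul0r /f mulr1n z // leq_min {2}ij !ltn_ord.
  rewrite mxrankMfree ?rank_pid_mx //.
  + by apply: leq_trans rle (geq_minl _ _).
  + by apply: leq_trans rle (geq_minr _ _).
  rewrite row_free_unit unitmxE det_diag unitfE; apply/prodf_neq0 => j _.
  rewrite mxE; case: ltnP => jr; last exact: oner_neq0.
  by rewrite /f intr_eq0 nz.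
- move=> i j rj; rewrite defM mulmxK // mxE big1 // => l _.
  by rewrite Dz ?mulr0.
Qed.

Lemma rank_map_seq (F : numFieldType) n (Xi : seq 'rV[int]_n) :
  \rank (\matrix_(i < size (map (map_mx (fun z : int => z%:~R : F)) Xi))
            (map (map_mx (fun z : int => z%:~R : F)) Xi)`_i)
  = \rank (map_mx (fun z : int => z%:~R : F) (\matrix_(i < size Xi) Xi`_i)).
Proof.
have e : (size Xi = size (map (map_mx (fun z : int => z%:~R : F)) Xi)) * (n = n).
  by rewrite size_map.
rewrite -(eqmx_cast _ e).
congr (\rank _); apply/matrixP => i j; rewrite castmxE !mxE /=.
rewrite (nth_map 0); last by rewrite -(size_map (map_mx (fun z : int => z%:~R : F))) ltn_ord.
by rewrite !mxE cast_ord_id.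
Qed.

Section Words.
Variable T : Type.
Implicit Types (R : seq (word T)) (u v w : word T).

Definition winv w : word T := rev (map (fun p => (p.1, - p.2)) w).
Definition nrep w (m : nat) : word T := flatten (nseq m w).
Definition zpow w (c : int) : word T :=
  match c with Posz m => nrep w m | Negz m => nrep (winv w) m.+1 end.

Lemma winv_cons p w : winv (p :: w) = winv w ++ [:: (p.1, - p.2)].
Proof. by rewrite /winv map_cons rev_cons cats1. Qed.

Lemma pstep_ctx R a b u v : pstep R u v -> pstep R (a ++ u ++ b) (a ++ v ++ b).
Proof.
case=> [u' v' r Hr|u' v' x c d|u' v' x].
- by have := pstep_rel (a ++ u') (v' ++ b) Hr; rewrite -!catA.
- by have := pstep_merge R (a ++ u') (v' ++ b) x c d; rewrite -!catA.
- by have := pstep_zero R (a ++ u') (v' ++ b) x; rewrite -!catA.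
Qed.

Lemma pequiv_ctx R a b u v : pequiv R u v -> pequiv R (a ++ u ++ b) (a ++ v ++ b).
Proof.
elim=> [x y H|x|x y _ IH|x y z _ IH1 _ IH2].
- by apply: rst_step; apply: pstep_ctx.
- exact: rst_refl.
- exact: rst_sym.
- exact: rst_trans IH2.
Qed.

Lemma pequiv_cat R u u' v v' : pequiv R u u' -> pequiv R v v' ->
  pequiv R (u ++ v) (u' ++ v').
Proof.
move=> H1 H2; apply: (rst_trans _ _ _ (u' ++ v)).
  by have := pequiv_ctx [::] v H1; rewrite /= .
by have := pequiv_ctx u' [::] H2; rewrite !cats0.
Qed.

Lemma winv_cancel R w : pequiv R (winv w ++ w) [::].
Proof.
elim: w => [|[x a] w IH]; first exact: rst_refl.
rewrite winv_cons -catA /=.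
apply: rst_trans IH.
apply: (rst_trans _ _ _ (winv w ++ (x, 0) :: w)).
  by apply: rst_step; have := pstep_merge R (winv w) w x (- a) a; rewrite addNr.
by apply: rst_step; apply: pstep_zero.
Qed.

Lemma rel_triv R r : List.In r R -> pequiv R r [::].
Proof. by move=> Hr; apply: rst_step; have := pstep_rel [::] [::] Hr; rewrite /= cats0. Qed.

Lemma inv_triv R u : pequiv R u [::] -> pequiv R (winv u) [::].
Proof.
move=> H; apply: rst_trans (winv_cancel R u).
by have := pequiv_cat (rst_refl _ _ (winv u)) (rst_sym _ _ _ _ H); rewrite cats0.
Qed.

Lemma nrep_triv R u m : pequiv R u [::] -> pequiv R (nrep u m) [::].
Proof.
move=> H; elim: m => [|m IH]; first exact: rst_refl.
by have := pequiv_cat H IH.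
Qed.

Lemma zpow_triv R u c : pequiv R u [::] -> pequiv R (zpow u c) [::].
Proof. by move=> H; case: c => m /=; apply: nrep_triv => //; apply: inv_triv. Qed.

End Words.

Section Eval.
Variables (T : Type) (n : nat) (f : T -> 'rV[int]_n).
Implicit Types (R : seq (word T)) (u v w : word T).

Lemma evalw_cat u v : evalw f (u ++ v) = evalw f u + evalw f v.
Proof. by rewrite /evalw big_cat. Qed.

Lemma evalw_nil : evalw f [::] = 0.
Proof. by rewrite /evalw big_nil. Qed.

Lemma evalw_cons p w : evalw f (p :: w) = f p.1 *~ p.2 + evalw f w.
Proof. by rewrite /evalw big_cons. Qed.

Lemma evalw_winv w : evalw f (winv w) = - evalw f w.
Proof.
elim: w => [|p w IH]; first by rewrite /winv /= evalw_nil oppr0.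
by rewrite winv_cons evalw_cat IH evalw_cons evalw_cons evalw_nil addr0 mulrNz opprD addrC.
Qed.

Lemma evalw_nrep w m : evalw f (nrep w m) = evalw f w *+ m.
Proof. by elim: m => [|m IH]; rewrite ?evalw_nil // /nrep /= evalw_cat -/(nrep w m) IH mulrS. Qed.

Lemma evalw_zpow w c : evalw f (zpow w c) = evalw f w *~ c.
Proof. by case: c => m /=; rewrite evalw_nrep ?evalw_winv // NegzE mulrNz mulNrn. Qed.

Lemma evalw_pequiv R u v : (forall r, List.In r R -> evalw f r = 0) ->
  pequiv R u v -> evalw f u = evalw f v.
Proof.
move=> HR; elim=> // [x y []|x y z _ -> _ ->] //.
- by move=> u' v' r /HR; rewrite !evalw_cat => ->; rewrite add0r.
- by move=> u' v' x' a b; rewrite !evalw_cat !evalw_cons /= mulrzDr !addrA.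
- by move=> u' v' x'; rewrite !evalw_cat !evalw_cons /= mulr0z add0r.
Qed.
End Eval.

Section Del.
Variables (T : finType) (S' : {set T}).
Implicit Types (R : seq (word T)) (u v w : word T).
Local Notation del := (delete_gens S').

Lemma del_cat u v : del (u ++ v) = del u ++ del v.
Proof. exact: filter_cat. Qed.

Lemma del_winv w : del (winv w) = winv (del w).
Proof. by rewrite /delete_gens /winv filter_rev filter_map. Qed.

Lemma del_nrep w m : del (nrep w m) = nrep (del w) m.
Proof. by elim: m => //= m IH; rewrite del_cat IH. Qed.

Lemma del_zpow w c : del (zpow w c) = zpow (del w) c.
Proof. by case: c => m /=; rewrite del_nrep ?del_winv. Qed.

Lemma del_pequiv R R2 u v : (forall r, List.In r R -> List.In (del r) R2) ->
  pequiv R u v -> pequiv R2 (del u) (del v).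
Proof.
move=> HR; elim=> [x y []|x|x y _ IH|x y z _ IH1 _ IH2].
- move=> u' v' r /HR Hr; rewrite !del_cat.
  by apply: rst_step; apply: pstep_rel.
- move=> u' v' x' a b; rewrite !del_cat /delete_gens /=.
  case: (x' \in S') => /=; first exact: rst_refl.
  exact/rst_step/pstep_merge.
- move=> u' v' x'; rewrite !del_cat /delete_gens /=.
  case: (x' \in S') => /=; first exact: rst_refl.
  exact/rst_step/pstep_zero.
- exact: rst_refl.
- exact: rst_sym.
- exact: rst_trans IH2.
Qed.
End Del.

Section Over.
Variables (T : finType).
Implicit Types (S : {set T}) (u v w : word T).

Lemma word_over_cat S u v : word_over S (u ++ v) = word_over S u && word_over S v.
Proof. exact: all_cat. Qed.

Lemma word_over_winv S w : word_over S (winv w) = word_over S w.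
Proof. by rewrite /word_over /winv all_rev all_map. Qed.

Lemma word_over_nrep S w m : word_over S w -> word_over S (nrep w m).
Proof. by move=> H; elim: m => //= m IH; rewrite word_over_cat H. Qed.

Lemma word_over_zpow S w c : word_over S w -> word_over S (zpow w c).
Proof. by move=> H; case: c => m /=; apply: word_over_nrep; rewrite ?word_over_winv. Qed.

Lemma word_over_flatten S (ss : seq (word T)) :
  (forall s, s \in ss -> word_over S s) -> word_over S (flatten ss).
Proof.
elim: ss => //= s ss IH H; rewrite word_over_cat H ?mem_head //=.
by apply: IH => x xs; apply: H; rewrite in_cons xs orbT.
Qed.
End Over.

Lemma flatten_triv (T : eqType) (R : seq (word T)) (ss : seq (word T)) :
  (forall s, s \in ss -> pequiv R s [::]) -> pequiv R (flatten ss) [::].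
Proof.
elim: ss => [|s ss IH] H /=; first exact: rst_refl.
apply: (pequiv_cat (H s (mem_head _ _))); apply: IH => x xs.
by apply: H; rewrite in_cons xs orbT.
Qed.

Lemma evalw_flatten (T : Type) n (f : T -> 'rV[int]_n) (ss : seq (word T)) :
  evalw f (flatten ss) = \sum_(s <- ss) evalw f s.
Proof. by elim: ss => [|s ss IH]; rewrite ?big_nil ?evalw_nil //= evalw_cat IH big_cons. Qed.

Lemma inP' (X : eqType) (x : X) s : x \in s -> List.In x s.
Proof. by elim: s => //= y s IH; rewrite in_cons => /orP [/eqP ->|/IH]; [left|right]. Qed.

Lemma evalw_mul (T : Type) n m (f : T -> 'rV[int]_n) (Q : 'M[int]_(n, m)) w :
  evalw (fun g => f g *m Q) w = evalw f w *m Q.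
Proof.
elim: w => [|p w IH]; first by rewrite !evalw_nil mul0mx.
by rewrite !evalw_cons IH mulmxDl; congr (_ + _); rewrite -(raddfMz (mulmxr Q)).
Qed.

Lemma inP2 (X : eqType) (x : X) s : List.In x s -> x \in s.
Proof. by elim: s => //= y s IH [->|/IH h]; rewrite in_cons ?eqxx ?h ?orbT. Qed.

Theorem mainTheorem15 (T : finType) (S S' : {set T}) (R : seq (word T))
  (n : nat) (phi : T -> 'rV[int]_n) :
  three_pres S R -> pres_iso S R phi -> S' \subset S ->
  let d := dimgen phi S' in
  exists ws : seq (word T),
    [/\ size ws = d, all (word_over S) ws &
      let R'' := map (delete_gens S') (R ++ ws) in
      pres_isoZn (S :\: S') R'' (n - d) /\ size R'' = (size R + d)%N].
Proof.
move=> H3 [Hker Hsurj] HS' d.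
pose Xi := [seq phi g | g <- enum S'].
pose M := \matrix_(i < size Xi) Xi`_i.
have [r [B [uB rn Hrank Hz]]] := snf_rank Reals.Rdefinitions.R M.
have Hd : d = r.
  rewrite /d /dimgen -Hrank -rank_map_seq -dim_span_rank; congr (\dim <<_>>)%VS.
  by rewrite -map_comp.
rewrite Hd.
pose A := invmx B.
have wof : forall v : 'rV[int]_n, {w | word_over S w && (evalw phi w == v)}.
  move=> v; apply: sigW; have [w Hw Hv] := Hsurj v; exists w; by rewrite Hw Hv eqxx.
pose ws := [seq sval (wof (row i B)) | i <- take r (enum 'I_n)].
exists ws; split.
- by rewrite size_map size_takel // size_enum_ord.
- by apply/allP => w /mapP [i _ ->]; case: (wof _) => /= w' /andP [].
have shP (j : 'I_(n - r)) : (r + j < n)%N.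
  by have := ltn_ord j; lia.
pose sh (j : 'I_(n - r)) : 'I_n := Ordinal (shP j).
pose P : 'M[int]_(n, n - r) := \matrix_(i, j) ((i : nat) == r + j)%N%:R.
have Pchar (u : 'rV[int]_n) j : (u *m P) 0 j = u 0 (sh j).
  rewrite !mxE (bigD1 (sh j)) //= mxE eqxx mulr1 big1 ?addr0 // => l nl.
  rewrite mxE (_ : ((l : nat) == r + j)%N = false) ?mulr0 //; apply/negbTE.
  by move: nl; apply: contra => /eqP h; apply/eqP/val_inj.
pose Q := A *m P.
have KQ (v : 'rV[int]_n) :
    v *m Q = 0 <-> forall j : 'I_n, (r <= j)%N -> (v *m A) 0 j = 0.
  split.
  - move=> h j rj; have jr : (j - r < n - r)%N by have := ltn_ord j; lia.
    have e : sh (Ordinal jr) = j by apply: val_inj => /=; lia.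
    have := congr1 (fun m : 'rV[int]_(n - r) => m 0 (Ordinal jr)) h.
    by rewrite /= /Q mulmxA Pchar e => ->; rewrite mxE.
  - move=> h; apply/rowP => j; rewrite /Q mulmxA Pchar [RHS]mxE; apply: h.
    exact: leq_addr.
pose phi' g := phi g *m Q.
have phi'0 g : g \in S' -> phi' g = 0.
  move=> gS; apply/KQ => j rj.
  have ig : (index g (enum S') < size Xi)%N by rewrite size_map index_mem mem_enum.
  have -> : phi g = row (Ordinal ig) M.
    rewrite rowK /Xi (nth_map g) ?nth_index ?mem_enum //.
    by rewrite index_mem mem_enum.
  by rewrite -row_mul mxE Hz.
have evdel w : evalw phi' (delete_gens S' w) = evalw phi' w.
  elim: w => [|p w IH] //=; rewrite /delete_gens /=.
  case: ifP => pS /=; rewrite !evalw_cons -/(delete_gens S' w) IH //.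
  by rewrite phi'0 ?mul0rz ?add0r //; move/negbFE: pS.
set R'' := map (delete_gens S') (R ++ ws).
have inR'' r0 : List.In r0 (R ++ ws) -> List.In (delete_gens S' r0) R''.
  exact: List.in_map.
have wsI (i : 'I_n) : (i < r)%N -> List.In (sval (wof (row i B))) ws.
  move=> ir; apply: inP'; apply/mapP; exists i => //.
  by rewrite in_take ?mem_enum // index_enum_ord.
split; last by rewrite size_map size_cat size_map size_takel // size_enum_ord.
exists phi'; split.
- move=> w Hw; split.
  + move/(@eq_trans _ _ _ _ (esym (evalw_mul phi Q w))).
    move/KQ => Hc; set c := evalw phi w *m A in Hc.
    pose W := flatten [seq zpow (sval (wof (row i B))) (- c 0 i) | i <- enum 'I_n].
    have wS : word_over S w.
      by apply/allP => p /(allP Hw); rewrite in_setD => /andP [].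
    have WS : word_over S W.
      apply: word_over_flatten => s /mapP [i _ ->]; apply: word_over_zpow.
      by case: (wof _) => /= w' /andP [].
    have Wev : evalw phi W = - evalw phi w.
      rewrite evalw_flatten big_map.
      have -> : evalw phi w = c *m B by rewrite /c /A mulmxKV.
      rewrite mulmx_sum_row -sumrN big_enum /=; apply: eq_bigr => i _.
      rewrite evalw_zpow; case: (wof _) => /= w' /andP [_ /eqP ->].
      by rewrite mulrNz -scaler_int intz.
    have h1 : pequiv R (w ++ W) [::].
      by apply/Hker; rewrite ?word_over_cat ?wS // evalw_cat Wev addrN.
    have h2 := del_pequiv (R2 := R'') (fun r0 Hr0 => inR'' r0 (List.in_or_app _ _ _ (or_introl Hr0))) h1.
    rewrite del_cat in h2.
    have dw : delete_gens S' w = w.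
      apply/all_filterP/allP => p /(allP Hw); rewrite in_setD => /andP [] //.
    rewrite dw in h2.
    have h3 : pequiv R'' (delete_gens S' W) [::].
      rewrite /W /delete_gens filter_flatten -map_comp; apply: flatten_triv.
      move=> s /mapP [i _ ->] /=; rewrite -/(delete_gens S' _) del_zpow.
      case: (ltnP i r) => ir.
        apply: zpow_triv; apply: rel_triv; apply: inR''.
        by apply: List.in_or_app; right; apply: wsI.
      by rewrite Hc // oppr0; exact: rst_refl.
    apply: rst_trans h2.
    by have := pequiv_cat (rst_refl _ _ w) (rst_sym _ _ _ _ h3); rewrite cats0.
  + move=> h; have := evalw_pequiv (f := phi') _ h; rewrite evalw_nil; apply.
    move=> r0 /List.in_map_iff [r1 [e Hr1]]; subst r0.
    have {}Hr1 := List.in_app_or _ _ _ Hr1.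
    rewrite evdel /phi' evalw_mul; apply/KQ => j rj.
    case: Hr1 => Hr1.
      have r1S : word_over S r1.
        by move: (allP H3 _ (inP2 Hr1)) => /andP [].
      by have := rel_triv Hr1; move/(Hker _ r1S) => ->; rewrite mul0mx mxE.
    move/inP2/mapP: Hr1 => [i iT ->].
    rewrite in_take ?mem_enum // index_enum_ord in iT.
    case: (wof _) => /= w' /andP [_ /eqP ->].
    rewrite -row_mul /A mulmxV // !mxE.
    by case: eqP => // ij; move: iT; rewrite ij ltnNge rj.
- move=> v'; pose u := v' *m P^T.
  have [w wS wv] := Hsurj (u *m B).
  exists (delete_gens S' w).
    apply/allP => p; rewrite mem_filter => /andP [pS' pw].
    by rewrite in_setD pS' (allP wS).
  rewrite evdel /phi' evalw_mul wv /Q mulmxA /A mulmxK //.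
  apply/rowP => j; rewrite Pchar !mxE (bigD1 j) //= !mxE eqxx mulr1 big1 ?addr0 // => l nl.
  rewrite !mxE (_ : (_ == _)%N = false) ?mulr0 //; apply/negbTE.
  by move: nl; apply: contra; rewrite /= eqn_add2l => /eqP h; apply/eqP/val_inj.
Qed.
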